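(* Let $\tau\ge 0$ be an integer, $\mathcal D=\{0,1,\dots,\tau\}$, let $\{\tau_n\}_{n\in\mathbb Z}$ be an i.i.d. sequence of random variables with values in $\mathcal D$ and $\Pr\{\tau_n=i\}=p_i$ ($\sum_{i=0}^\tau p_i=1$), and let $\alpha_0,\dots,\alpha_\tau$ be real numbers. For integers $k,n$ define $$\omega(k,n)=\begin{cases}\alpha_{k-n}\big[\delta(\tau_n-(k-n))-p_{k-n}\big], & n\le k\le n+\tau,\\ 0,&\text{otherwise},\end{cases}$$ where $\delta$ is the Kronecker delta. For a fixed $n$ define $r(l)=\mathbb E\big\{\sum_{k=-\infty}^{\infty}\omega(k,n)\omega(k+l,n)\big\}$ for $l\in\mathbb Z$ and $S_\Omega(z)=\sum_{l=-\infty}^{\infty} r(l)z^{-l}$. Then $$S_\Omega(z)=\frac12\sum_{i_1,i_2=0}^{\tau}\big(\alpha_{i_1}z^{i_1}-\alpha_{i_2}z^{i_2}\big)\big(\alpha_{i_1}z^{-i_1}-\alpha_{i_2}z^{-i_2}\big)p_{i_1}p_{i_2}.$$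
   Context: $\omega(k,n)$ is the deviation of the (random) impulse response of a channel with random transmission delays from its mean; $S_\Omega$ is called the energy spectral density of the channel uncertainty. *)

(* Defs.v *)
From HB Require Import structures.
From mathcomp Require Import all_boot all_order all_algebra.
From mathcomp Require Import all_classical all_reals all_analysis.
From mathcomp Require Import complex.
Set Implicit Arguments. Unset Strict Implicit. Unset Printing Implicit Defensive.
Import Order.TTheory GRing.Theory Num.Theory.
Local Open Scope classical_set_scope.
Local Open Scope ring_scope.

Definition discrete_mutual_indep d (T : measurableType d) (R : realType)
    (P : probability T R) (tau : int -> T -> nat) : Prop :=
  forall (s : seq int) (v : int -> nat), uniq s ->
    P (\bigcap_(j in [set` s]) (tau j @^-1` [set v j])) =
    (\prod_(j <- s) P (tau j @^-1` [set v j]))%E.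

Definition omega d (T : measurableType d) (R : realType)
    (dmax : nat) (alpha p : nat -> R) (tau : int -> T -> nat)
    (k n : int) (x : T) : R :=
  if (n <= k) && (k <= n + dmax%:Z) then
    let i := `|k - n|%N in
    alpha i * ((tau n x == i)%:R - p i)
  else 0.

(* r(l) = E{ sum_{k in Z} omega(k,n) omega(k+l,n) }  (the sum over all of Z
   is the finitely-supported sum of fsbigop) *)
Definition corr d (T : measurableType d) (R : realType) (P : probability T R)
    (dmax : nat) (alpha p : nat -> R) (tau : int -> T -> nat)
    (n l : int) : R :=
  fine ('E_P[(fun x => \sum_(k \in [set: int])
                 omega dmax alpha p tau k n x * omega dmax alpha p tau (k + l) n x)%R])%E.

Definition S_Omega d (T : measurableType d) (R : realType) (P : probability T R)
    (dmax : nat) (alpha p : nat -> R) (tau : int -> T -> nat)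
    (n : int) (z : R[i]) : R[i] :=
  \sum_(l \in [set: int]) ((corr P dmax alpha p tau n l)%:C)%C * z ^ (- l).

(* Main.v *)
Require Import Defs.
From HB Require Import structures.
From mathcomp Require Import all_boot all_order all_algebra.
From mathcomp Require Import all_classical all_reals all_analysis.
From mathcomp Require Import complex.
From mathcomp Require Import zify ring.
Import Order.TTheory GRing.Theory Num.Theory.
Local Open Scope classical_set_scope.
Local Open Scope ring_scope.

Lemma sum_indl {R : realType} (D t : nat) (g : nat -> R) : (t <= D)%N ->
  \sum_(v < D.+1) (t == v)%:R * g v = g t.
Proof.
move=> tD; rewrite (bigD1 (Ordinal (tD : (t < D.+1)%N))) //= eqxx mul1r big1 ?addr0 //.
move=> i /eqP hi; case: eqP => [h|_]; last by rewrite mul0r.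
by exfalso; apply: hi; apply: val_inj.
Qed.

Definition wv {R : realType} (alpha p : nat -> R) (v i : nat) : R :=
  alpha i * ((v == i)%:R - p i).

Lemma om_sum {d} {T : measurableType d} {R : realType} (dmax : nat) (alpha p : nat -> R)
  (tau : int -> T -> nat) (k n : int) (x : T) :
  omega dmax alpha p tau k n x =
  \sum_(i < dmax.+1) (k == n + (i:nat)%:Z)%:R * wv alpha p (tau n x) i.
Proof.
rewrite /omega; case: ifP => [/andP[h1 h2]|h].
  have mD : (`|k - n|%N <= dmax)%N by lia.
  transitivity (wv alpha p (tau n x) `|k - n|%N); first by [].
  rewrite -(@sum_indl _ _ _ (wv alpha p (tau n x)) mD); apply: eq_bigr => i _.
  congr (_ * _); congr (_%:R).
  by case: eqP => e1; case: eqP => e2 //; exfalso; lia.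
symmetry; apply: big1 => i _.
case: eqP => [e|]; last by rewrite mul0r.
move/negbT: h; rewrite e; have := ltn_ord i; lia.
Qed.
Lemma sum_ind {R : realType} (D t : nat) (g : nat -> R) : (t <= D)%N ->
  \sum_(v < D.+1) g v * (t == v)%:R = g t.
Proof.
move=> tD; rewrite (bigD1 (Ordinal (tD : (t < D.+1)%N))) //= eqxx mulr1 big1 ?addr0 //.
move=> i /eqP hi; rewrite eq_sym; case: eqP => [h|_]; last by rewrite mulr0.
by exfalso; apply: hi; apply: val_inj.
Qed.

Lemma E_fun {d} {T : measurableType d} {R : realType}
    (P : probability T R) (dmax : nat) (p : nat -> R)
    (tau : int -> T -> nat)
    (htau_range : forall n x, (tau n x <= dmax)%N)
    (htau_meas : forall n i, measurable (tau n @^-1` [set i]))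
    (htau_law : forall n i, (i <= dmax)%N -> P (tau n @^-1` [set i]) = (p i)%:E)
    (n : int) (g : nat -> R) :
  ('E_P[fun x => g (tau n x)] = (\sum_(v < dmax.+1) g v * p v)%:E)%E.
Proof.
have -> : (fun x => g (tau n x)) = (fun x => \sum_(v < dmax.+1) g v * \1_(tau n @^-1` [set (v:nat)]) x).
  apply: funext => x; rewrite -(@sum_ind _ _ _ g (htau_range n x)).
  apply: eq_bigr => v _; rewrite indicE; have [e|e] := eqVneq (tau n x) v.
    by rewrite mem_set.
  by rewrite memNset //; exact/eqP.
rewrite unlock.
under eq_integral do rewrite -sumEFin.
rewrite integral_sum //; last first.
  move=> v; under eq_fun do rewrite EFinM.
  exact/integrableZl/integrable_indic.
rewrite -sumEFin; apply: eq_bigr => v _.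
under eq_integral do rewrite EFinM.
rewrite integralZl; last exact: integrable_indic.
rewrite integral_indic // setIT.
have h := htau_law n v (ltn_ord v).
rewrite EFinM; congr (_ * _)%E; exact: h.
exact: measurableT.
Qed.

Definition Gl {R : realType} (alpha p : nat -> R) (dmax : nat) (l : int) (v : nat) : R :=
  \sum_(i < dmax.+1) \sum_(j < dmax.+1)
    ((j:nat)%:Z - (i:nat)%:Z == l)%:R * (wv alpha p v i * wv alpha p v j).

Lemma inner {d} {T : measurableType d} {R : realType} (dmax : nat) (alpha p : nat -> R)
  (tau : int -> T -> nat) (n l : int) (x : T) :
  \sum_(k \in [set: int]) omega dmax alpha p tau k n x * omega dmax alpha p tau (k + l) n x
  = Gl alpha p dmax l (tau n x).
Proof.
rewrite (fsbigE [seq n + (i:nat)%:Z | i <- index_iota 0 dmax.+1]).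
- rewrite big_map; under eq_bigl do rewrite in_setT.
  rewrite big_mkord; apply: eq_bigr => i _.
  have -> : omega dmax alpha p tau (n + (i:nat)%:Z) n x = wv alpha p (tau n x) i.
    rewrite /omega ifT; last by have := ltn_ord i; lia.
    by have -> : absz (n + (i:nat)%:Z - n)%R = i by lia.
  rewrite om_sum mulr_sumr; apply: eq_bigr => j _.
  have -> : (n + (i:nat)%:Z + l == n + (j:nat)%:Z) = ((j:nat)%:Z - (i:nat)%:Z == l).
    by case: eqP => e1; case: eqP => e2 //; exfalso; lia.
  by rewrite mulrCA.
- rewrite map_inj_uniq ?iota_uniq // => a b /addrI; by case.
- by [].
- move=> k _ kr; rewrite om_sum big1 ?mul0r // => j _.
  case: eqP => [e|]; last by rewrite mul0r.
  exfalso; move/negP: kr; apply; apply/mapP; exists (j:nat); last exact: e.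
  by rewrite mem_index_iota leq0n ltn_ord.
Qed.
Lemma alg (C : numFieldType) (D : nat) (A P u : nat -> C)
  (hu : forall i, u i != 0) (hP : \sum_(i < D.+1) P i = 1) :
  \sum_(i < D.+1) \sum_(j < D.+1)
     A i * A j * (((i:nat) == (j:nat))%:R * P i - P i * P j) * (u i / u j) =
  2^-1 * \sum_(i < D.+1) \sum_(j < D.+1)
     (A i * u i - A j * u j) * (A i / u i - A j / u j) * P i * P j.
Proof.
pose f (i j : nat) := A i ^+ 2 * P i * P j - A i * A j * P i * P j * (u i / u j).
have -> : \sum_(i < D.+1) \sum_(j < D.+1)
     (A i * u i - A j * u j) * (A i / u i - A j / u j) * P i * P j =
   \sum_(i < D.+1) \sum_(j < D.+1) (f i j + f j i).
  apply: eq_bigr => i _; apply: eq_bigr => j _; rewrite /f.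
  have := hu i; have := hu j; move=> hj hi; field; exact/andP.
have -> : \sum_(i < D.+1) \sum_(j < D.+1) (f i j + f j i) =
   \sum_(i < D.+1) \sum_(j < D.+1) f i j + \sum_(i < D.+1) \sum_(j < D.+1) f j i.
  by rewrite -big_split; apply: eq_bigr => i _; rewrite big_split.
rewrite [X in _ + X]exchange_big /= -mulr2n.
have h2 : (2 : C) != 0 by rewrite pnatr_eq0.
have h2x : forall x : C, 2^-1 * (x *+ 2) = x.
  by move=> x; rewrite -[x *+ 2]mulr_natl mulrA mulVf // mul1r.
rewrite h2x.
have -> : \sum_(i < D.+1) \sum_(j < D.+1) f i j =
  \sum_(i < D.+1) \sum_(j < D.+1) ((A i ^+ 2 * P i) * P j) -
  \sum_(i < D.+1) \sum_(j < D.+1) A i * A j * P i * P j * (u i / u j).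
  by rewrite -sumrB; apply: eq_bigr => i _; rewrite -sumrB.
have -> : \sum_(i < D.+1) \sum_(j < D.+1) A i * A j * (((i:nat) == (j:nat))%:R * P i - P i * P j) * (u i / u j)
  = \sum_(i < D.+1) \sum_(j < D.+1) ((i == j)%:R * (A i * A j * P i * (u i / u j))) -
  \sum_(i < D.+1) \sum_(j < D.+1) A i * A j * P i * P j * (u i / u j).
  rewrite -sumrB; apply: eq_bigr => i _; rewrite -sumrB; apply: eq_bigr => j _.
  rewrite /=; ring.
congr (_ - _); apply: eq_bigr => i _.
rewrite -mulr_sumr hP mulr1.
rewrite (bigD1 i) //= eqxx mul1r big1 ?addr0.
  by rewrite mulfV // mulr1 expr2.
by move=> j /negbTE; rewrite eq_sym => ->; rewrite mul0r.
Qed.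

Lemma c_eq {R : realType} (D : nat) (alpha p : nat -> R)
  (hp1 : \sum_(i < D.+1) p i = 1) (i j : nat) (hi : (i <= D)%N) (hj : (j <= D)%N) :
  \sum_(v < D.+1) wv alpha p v i * wv alpha p v j * p v =
  alpha i * alpha j * ((i == j)%:R * p i - p i * p j).
Proof.
have e1 : forall k, (k <= D)%N -> \sum_(v < D.+1) ((v:nat) == k)%:R * p v = p k.
  move=> k hk; rewrite -(@sum_indl _ _ _ p hk); apply: eq_bigr => v _; by rewrite eq_sym.
have e2 : \sum_(v < D.+1) (((v:nat) == i)%:R * ((v:nat) == j)%:R) * p v = (i == j)%:R * p i.
  have [<-|ne] := eqVneq i j.
    rewrite mul1r -(e1 i hi); apply: eq_bigr => v _.
    by case: (_ == _); rewrite ?mul1r ?mul0r.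
  rewrite (_ : false%:R = 0) // mul0r; apply: big1 => v _.
  case: eqP => [e|]; last by rewrite mul0r mul0r.
  case: eqP => [e'|]; last by rewrite mulr0 mul0r.
  by exfalso; move/eqP: ne; apply; rewrite -e -e'.
transitivity (\sum_(v < D.+1) (alpha i * alpha j) *
   ((((v:nat) == i)%:R * ((v:nat) == j)%:R) * p v - p j * (((v:nat) == i)%:R * p v)
    - p i * (((v:nat) == j)%:R * p v) + p i * p j * p v)).
  by apply: eq_bigr => v _; rewrite /wv; ring.
rewrite -mulr_sumr; congr (_ * _).
rewrite big_split /= !sumrB e2 -!mulr_sumr e1 // e1 // hp1; ring.
Qed.

Lemma corr_eq {d} {T : measurableType d} {R : realType}
    (P : probability T R) (dmax : nat) (p alpha : nat -> R)
    (tau : int -> T -> nat)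
    (htau_range : forall n x, (tau n x <= dmax)%N)
    (htau_meas : forall n i, measurable (tau n @^-1` [set i]))
    (htau_law : forall n i, (i <= dmax)%N -> P (tau n @^-1` [set i]) = (p i)%:E)
    (n l : int) :
  corr P dmax alpha p tau n l = \sum_(v < dmax.+1) Gl alpha p dmax l v * p v.
Proof.
rewrite /corr.
transitivity (fine ('E_P[fun x => Gl alpha p dmax l (tau n x)])%E).
  by congr (fine (expectation P _)); apply: funext => x; exact: inner.
by rewrite (E_fun P dmax p tau htau_range htau_meas htau_law).
Qed.

Theorem lemma2 (d : measure_display) (T : measurableType d) (R : realType)
    (P : probability T R) (dmax : nat) (p alpha : nat -> R)
    (tau : int -> T -> nat)
    (hp0 : forall i, (i <= dmax)%N -> 0 <= p i)
    (hp1 : \sum_(i < dmax.+1) p i = 1)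
    (htau_range : forall n x, (tau n x <= dmax)%N)
    (htau_meas : forall n i, measurable (tau n @^-1` [set i]))
    (htau_law : forall n i, (i <= dmax)%N -> P (tau n @^-1` [set i]) = (p i)%:E)
    (htau_indep : discrete_mutual_indep P tau)
    (n : int) (z : R[i]) (hz : z != 0) :
  S_Omega P dmax alpha p tau n z =
  2^-1 * \sum_(i1 < dmax.+1) \sum_(i2 < dmax.+1)
     (((alpha i1)%:C)%C * z ^+ i1 - ((alpha i2)%:C)%C * z ^+ i2) *
     (((alpha i1)%:C)%C * z ^- i1 - ((alpha i2)%:C)%C * z ^- i2) *
     ((p i1)%:C)%C * ((p i2)%:C)%C.
Proof.
pose c (i j : nat) := alpha i * alpha j * ((i == j)%:R * p i - p i * p j).
pose H (i j : nat) : R[i] := ((c i j)%:C)%C * z ^ ((i:int) - (j:int)).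
have key : forall l : int,
  ((corr P dmax alpha p tau n l)%:C)%C * z ^ (- l) =
  \sum_(i < dmax.+1) \sum_(j < dmax.+1) (((j:nat)%:Z - (i:nat)%:Z == l)%:R * H i j).
  move=> l; rewrite (corr_eq P dmax p alpha tau htau_range htau_meas htau_law).
  have -> : \sum_(v < dmax.+1) Gl alpha p dmax l v * p v =
      \sum_(i < dmax.+1) \sum_(j < dmax.+1) (((j:nat)%:Z - (i:nat)%:Z == l)%:R * c i j).
    rewrite /Gl.
    transitivity (\sum_(i < dmax.+1) \sum_(j < dmax.+1) \sum_(v < dmax.+1)
       (((j:nat)%:Z - (i:nat)%:Z == l)%:R * (wv alpha p v i * wv alpha p v j * p v))).
      under eq_bigr do rewrite mulr_suml.
      rewrite exchange_big; apply: eq_bigr => i _.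
      under eq_bigr do rewrite mulr_suml.
      rewrite exchange_big; apply: eq_bigr => j _; apply: eq_bigr => v _.
      by rewrite -mulrA.
    apply: eq_bigr => i _; apply: eq_bigr => j _.
    by rewrite -mulr_sumr c_eq // -ltnS.
  rewrite rmorph_sum mulr_suml; apply: eq_bigr => i _.
  rewrite rmorph_sum mulr_suml; apply: eq_bigr => j _.
  rewrite rmorphM rmorph_nat /H; case: eqP => [e|_]; last by rewrite !mul0r.
  by rewrite !mul1r -e opprB.
rewrite /S_Omega.
under eq_fsbigr do rewrite key.
rewrite (fsbigE (undup [seq ((j:nat)%:Z - (i:nat)%:Z) | i : 'I_dmax.+1 <- enum 'I_dmax.+1, j : 'I_dmax.+1 <- enum 'I_dmax.+1])).
- under eq_bigl do rewrite in_setT.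
  transitivity (\sum_(i < dmax.+1) \sum_(j < dmax.+1) H i j).
    rewrite exchange_big; apply: eq_bigr => i _.
    rewrite exchange_big; apply: eq_bigr => j _.
    rewrite (bigD1_seq ((j:nat)%:Z - (i:nat)%:Z)) ?undup_uniq //=.
      rewrite eqxx mul1r big1 ?addr0 // => l /negbTE.
      by rewrite eq_sym => ->; rewrite mul0r.
    by rewrite mem_undup; apply/allpairsP; exists (i, j); rewrite !mem_enum.
  have hP : \sum_(i < dmax.+1) ((p i)%:C)%C = 1 :> R[i] by rewrite -rmorph_sum hp1 rmorph1.
  rewrite -(@alg _ dmax (fun i => ((alpha i)%:C)%C) (fun i => ((p i)%:C)%C) (fun i => z ^+ i)
     (fun i => expf_neq0 i hz) hP) /=.
  apply: eq_bigr => i _; apply: eq_bigr => j _.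
  rewrite /H /c !rmorphM rmorphB !rmorphM rmorph_nat.
  by rewrite expfzDr // -invr_expz.
- exact: undup_uniq.
- by [].
- move=> l _ lr; apply: big1 => i _; apply: big1 => j _.
  case: eqP => [e|]; last by rewrite mul0r.
  exfalso; move/negP: lr; apply; rewrite mem_undup -e.
  by apply/allpairsP; exists (i, j); rewrite !mem_enum.
Qed.
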